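(* Let $\mu>0$, $u_a\in\mathbb{R}$, $\omega_0\ge0$, $\sigma_0\in\mathbb{R}$, and let $\alpha_l,\alpha_r,u_l,u_r$ be continuous functions on $[0,\infty)$ with $\alpha_l(t),\alpha_r(t)>0$ and $u_l(t)>u_r(t)$ for all $t\ge0$. Suppose $(\omega,\sigma)\in\mathcal{C}^1([0,\infty))^2$ solves $$\frac{d\omega}{dt}=(\alpha_r-\alpha_l)\sigma-(\alpha_ru_r-\alpha_lu_l),\quad \frac{d(\omega\sigma)}{dt}=(\alpha_ru_r-\alpha_lu_l)\sigma-(\alpha_ru_r^2-\alpha_lu_l^2)+\mu(u_a-\sigma)\omega,$$ with $\omega(0)=\omega_0$, $\sigma(0)\omega(0)=\sigma_0\omega_0$. If $u_r(t)<\sigma(t)<u_l(t)$ for all $t\ge0$, then $\omega(t_2)>\omega(t_1)$ whenever $t_2>t_1\ge0$. In particular, in the Riemann case $\alpha_l\equiv\alpha_->0$, $\alpha_r\equiv\alpha_+>0$, $u_l(t)=u_a+(u_--u_a)e^{-\mu t}$, $u_r(t)=u_a+(u_+-u_a)e^{-\mu t}$ with $u_->u_+$, one has $\omega(t)\ge\omega_0+\frac{K(1-e^{-\mu t})}{\mu}$ for all $t\ge0$, where $K=\min\{\alpha_-,\alpha_+\}(u_--u_+)$. *)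

(* Defs.v *)
From Stdlib Require Import Reals.
Open Scope R_scope.

Definition cont_nonneg (f : R -> R) : Prop :=
  forall t, 0 <= t -> forall eps, 0 < eps -> exists delta, 0 < delta /\
    forall s, 0 <= s -> Rabs (s - t) < delta -> Rabs (f s - f t) < eps.

Definition has_deriv_nonneg (f f' : R -> R) : Prop :=
  forall t, 0 <= t -> forall eps, 0 < eps -> exists delta, 0 < delta /\
    forall h, h <> 0 -> Rabs h < delta -> 0 <= t + h ->
      Rabs ((f (t + h) - f t) / h - f' t) < eps.

Definition C1_nonneg (f : R -> R) : Prop :=
  exists f', has_deriv_nonneg f f' /\ cont_nonneg f'.

Definition solves (mu ua om0 sig0 : R) (al ar ul ur om sig : R -> R) : Prop :=
  C1_nonneg om /\ C1_nonneg sig /\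
  has_deriv_nonneg om
    (fun t => (ar t - al t) * sig t - (ar t * ur t - al t * ul t)) /\
  has_deriv_nonneg (fun t => om t * sig t)
    (fun t => (ar t * ur t - al t * ul t) * sig t
              - (ar t * (ur t)^2 - al t * (ul t)^2)
              + mu * (ua - sig t) * om t) /\
  om 0 = om0 /\ sig 0 * om 0 = sig0 * om0.

(* Main.v *)
Require Import Defs.
From Stdlib Require Import Reals Lra.
From Coquelicot Require Import Coquelicot.
Open Scope R_scope.

Lemma lip_bound f f' x : has_deriv_nonneg f f' -> 0 <= x ->
  exists d, 0 < d /\ forall y, 0 <= y -> Rabs (y - x) < d ->
    Rabs (f y - f x) <= (Rabs (f' x) + 1) * Rabs (y - x).
Proof.
  intros Hd Hx. destruct (Hd x Hx 1 ltac:(lra)) as [d [Hd0 H]].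
  exists d; split; auto. intros y Hy Hyx.
  destruct (Req_dec y x) as [->|Hne].
  - replace (x - x) with 0 by ring. rewrite Rminus_diag, !Rabs_R0. lra.
  - set (h := y - x). assert (Hh : h <> 0) by (unfold h; lra).
    specialize (H h Hh Hyx ltac:(unfold h; lra)).
    replace (x + h) with y in H by (unfold h; ring).
    assert (Hq : Rabs ((f y - f x) / h) < Rabs (f' x) + 1).
    { pose proof (Rabs_triang ((f y - f x) / h - f' x) (f' x)).
      replace ((f y - f x) / h - f' x + f' x) with ((f y - f x) / h) in H0 by ring. lra. }
    replace (f y - f x) with ((f y - f x) / h * h) by (field; auto).
    rewrite Rabs_mult. apply Rmult_le_compat_r. apply Rabs_pos. lra.
Qed.

Lemma mvt_nonneg f f' a b : has_deriv_nonneg f f' -> 0 <= a -> a < b ->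
  exists c, a <= c <= b /\ f b - f a = f' c * (b - a).
Proof.
  intros Hd Ha Hab.
  set (g := fun x => f (Rmax x 0)).
  assert (Hg : forall x, 0 <= x -> g x = f x).
  { intros x Hx; unfold g; rewrite Rmax_left; auto. }
  destruct (MVT_gen g a b f') as [c [Hc Heq]].
  - intros x Hx. rewrite Rmin_left in Hx by lra. rewrite Rmax_right in Hx by lra.
    apply is_derive_Reals. intros eps Heps.
    destruct (Hd x ltac:(lra) eps Heps) as [d [Hd0 H]].
    assert (Hm : 0 < Rmin d x) by (apply Rmin_pos; lra).
    exists (mkposreal _ Hm). intros h Hh Hhd. simpl in Hhd.
    assert (Hh1 : Rabs h < d) by (pose proof (Rmin_l d x); lra).
    assert (Hh2 : Rabs h < x) by (pose proof (Rmin_r d x); lra).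
    assert (Hpos : 0 <= x + h) by (pose proof (Rabs_le_between' h 0 (Rabs h)) as [_ _]; apply Rabs_def2 in Hh2; lra).
    rewrite (Hg (x+h) Hpos), (Hg x ltac:(lra)). apply H; auto.
  - intros x Hx. rewrite Rmin_left in Hx by lra. rewrite Rmax_right in Hx by lra.
    destruct (lip_bound f f' x Hd ltac:(lra)) as [d [Hd0 H]].
    unfold continuity_pt, continue_in, limit1_in, limit_in; simpl; unfold R_dist.
    intros eps Heps.
    set (C := Rabs (f' x) + 1).
    assert (HC : 0 < C) by (unfold C; pose proof (Rabs_pos (f' x)); lra).
    assert (Hm : 0 < Rmin d (eps / C)) by (apply Rmin_pos; [lra| apply Rdiv_lt_0_compat; lra]).
    exists (Rmin d (eps / C)); split; [lra|].
    intros y [_ Hy]. rewrite (Hg x ltac:(lra)). unfold g.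
    assert (Hz : Rabs (Rmax y 0 - x) <= Rabs (y - x)).
    { unfold Rmax; destruct (Rle_dec y 0).
      - rewrite !Rabs_left1 by lra. lra.
      - lra. }
    assert (Hz2 : Rabs (Rmax y 0 - x) < d) by (pose proof (Rmin_l d (eps/C)); lra).
    specialize (H (Rmax y 0) (Rmax_r y 0) Hz2).
    assert (Hz3 : Rabs (Rmax y 0 - x) < eps / C) by (pose proof (Rmin_r d (eps/C)); lra).
    apply Rle_lt_trans with (1 := H).
    apply Rmult_lt_compat_l with (r := C) in Hz3; auto.
    unfold C in *. field_simplify in Hz3; lra.
  - rewrite Rmin_left in Hc by lra. rewrite Rmax_right in Hc by lra.
    exists c; split; auto. rewrite <- (Hg b), <- (Hg a); lra.
Qed.

Theorem mainTheorem12 :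
  (forall (mu ua om0 sig0 : R) (al ar ul ur om sig : R -> R),
    0 < mu -> 0 <= om0 ->
    cont_nonneg al -> cont_nonneg ar -> cont_nonneg ul -> cont_nonneg ur ->
    (forall t, 0 <= t -> 0 < al t /\ 0 < ar t /\ ur t < ul t) ->
    solves mu ua om0 sig0 al ar ul ur om sig ->
    (forall t, 0 <= t -> ur t < sig t < ul t) ->
    forall t1 t2, 0 <= t1 -> t1 < t2 -> om t1 < om t2)
  /\
  (forall (mu ua om0 sig0 am ap um up : R) (om sig : R -> R),
    0 < mu -> 0 <= om0 -> 0 < am -> 0 < ap -> up < um ->
    let al := fun _ : R => am in
    let ar := fun _ : R => ap in
    let ul := fun t => ua + (um - ua) * exp (- mu * t) in
    let ur := fun t => ua + (up - ua) * exp (- mu * t) in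
    solves mu ua om0 sig0 al ar ul ur om sig ->
    (forall t, 0 <= t -> ur t < sig t < ul t) ->
    forall t, 0 <= t ->
      om t >= om0 + Rmin am ap * (um - up) * (1 - exp (- mu * t)) / mu).
Proof.
  split.
  - intros mu ua om0 sig0 al ar ul ur om sig Hmu Hom0 _ _ _ _ Hpos Hs Hsig t1 t2 Ht1 Ht12.
    destruct Hs as [_ [_ [Hd _]]].
    destruct (mvt_nonneg _ _ t1 t2 Hd Ht1 Ht12) as [c [Hc Heq]].
    destruct (Hpos c ltac:(lra)) as [Ha [Hb _]]. destruct (Hsig c ltac:(lra)).
    assert (0 < (ar c - al c) * sig c - (ar c * ur c - al c * ul c)).
    { replace ((ar c - al c) * sig c - (ar c * ur c - al c * ul c))
        with (ar c * (sig c - ur c) + al c * (ul c - sig c)) by ring.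
      apply Rplus_lt_0_compat; apply Rmult_lt_0_compat; lra. }
    assert (0 < ((ar c - al c) * sig c - (ar c * ur c - al c * ul c)) * (t2 - t1)) by (apply Rmult_lt_0_compat; lra).
    lra.
  - intros mu ua om0 sig0 am ap um up om sig Hmu Hom0 Ham Hap Hu al ar ul ur Hs Hsig t Ht.
    destruct Hs as [_ [_ [Hd [_ [H0 _]]]]].
    set (K := Rmin am ap * (um - up)).
    set (g := fun s => om s - K * (1 - exp (- mu * s)) / mu).
    set (g' := fun s => ((ar s - al s) * sig s - (ar s * ur s - al s * ul s)) - K * exp (- mu * s)).
    assert (Hgd : has_deriv_nonneg g g').
    { intros s Hs0 eps Heps.
      assert (He : derivable_pt_lim (fun s => K * (1 - exp (- mu * s)) / mu) s (K * exp (- mu * s))).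
      { apply is_derive_Reals. auto_derive; auto. field. lra. }
      destruct (He (eps/2) ltac:(lra)) as [d1 Hd1].
      destruct (Hd s Hs0 (eps/2) ltac:(lra)) as [d2 [Hd2 H2]].
      exists (Rmin d1 d2); split. apply Rmin_pos; [apply cond_pos|lra].
      intros h Hh Hhd Hsh.
      specialize (Hd1 h Hh ltac:(pose proof (Rmin_l d1 d2); lra)).
      specialize (H2 h Hh ltac:(pose proof (Rmin_r d1 d2); lra) Hsh).
      unfold g, g'.
      replace ((om (s + h) - K * (1 - exp (- mu * (s + h))) / mu -
         (om s - K * (1 - exp (- mu * s)) / mu)) / h -
       ((ar s - al s) * sig s - (ar s * ur s - al s * ul s) - K * exp (- mu * s)))
       with (((om (s + h) - om s) / h - ((ar s - al s) * sig s - (ar s * ur s - al s * ul s)))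
             - ((K * (1 - exp (- mu * (s + h))) / mu - K * (1 - exp (- mu * s)) / mu) / h - K * exp (- mu * s)))
       by (field; split; [lra|auto]).
      match goal with |- Rabs (?a - ?b) < _ => pose proof (Rabs_triang a (- b)); rewrite Rabs_Ropp in *; unfold Rminus at 1 end. lra. }
    destruct (Req_dec t 0) as [->|Htn].
    + rewrite H0. replace (- mu * 0) with 0 by ring. rewrite exp_0. lra.
    + destruct (mvt_nonneg g g' 0 t Hgd ltac:(lra) ltac:(lra)) as [c [Hc Heq]].
      assert (Hg'c : 0 <= g' c).
      { unfold g', al, ar, ul, ur, K. destruct (Hsig c ltac:(lra)) as [Hs1 Hs2].
        unfold ul, ur in Hs1, Hs2.
        set (E := exp (- mu * c)) in *.
        replace ((ap - am) * sig c - (ap * (ua + (up - ua) * E) - am * (ua + (um - ua) * E)))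
          with (ap * (sig c - (ua + (up - ua) * E)) + am * ((ua + (um - ua) * E) - sig c)) by ring.
        pose proof (Rmin_l am ap); pose proof (Rmin_r am ap).
        replace (Rmin am ap * (um - up) * E) with
           (Rmin am ap * (sig c - (ua + (up - ua) * E)) + Rmin am ap * ((ua + (um - ua) * E) - sig c)) by ring.
        nra. }
      unfold g in Heq. rewrite H0 in Heq. replace (- mu * 0) with 0 in Heq by ring.
      rewrite exp_0 in Heq. fold K. nra.
Qed.
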